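(* Define integer matrices $(a(i,j))_{i,j\ge1}$ and $(b(i,j))_{i,j\ge1}$ as follows. The first three rows are (entries listed for $j=1,2,\dots$; all further entries in these rows are $0$): \begin{itemize} \item $a(1,\cdot)=(10,-36,27)$; $a(2,\cdot)=(-8,306,-2160,5508,-5832,2187)$; $a(3,\cdot)=(1,-360,10566,-99144,423549,-944784,1141614,-708588,177147)$; \item $b(1,\cdot)=(-9,252,-891,729)$; $b(2,\cdot)=(1,-378,8613,-54675,138510,-150903,59049)$; $b(3,\cdot)=(0,147,-14553,312255,-2617839,10764414,-23914845,29288304,-18600435,4782969)$. \end{itemize} For $i\ge4$ and $j\ge1$, both $m=a$ and $m=b$ satisfy $$m(i,j)=30m(i-1,j-1)-108m(i-1,j-2)+81m(i-1,j-3)-12m(i-2,j-1)+9m(i-2,j-2)+m(i-3,j-1),$$ with $m(i,j)=0$ whenever $j\le0$. Define integer sequences $d_\alpha=(d_\alpha(j))_{j\ge1}$ for $\alpha\ge1$ by $d_1=(9,0,0,\dots)$ and, for $\alpha\ge2$, $d_\alpha(j)=\sum_{k\ge1}a(k,j)d_{\alpha-1}(k)$ if $\alpha$ is even and $d_\alpha(j)=\sum_{k\ge1}b(k,j)d_{\alpha-1}(k)$ if $\alpha$ is odd. Then for all $\alpha\ge1$ and $j\ge1$, $$\pi(d_{2\alpha-1}(j))\ge 2\alpha+\left\lfloor\frac{2j-2}{3}\right\rfloor.$$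
   Context: For an integer $n$, $\pi(n)$ denotes the $3$-adic order of $n$, with the convention $\pi(0)=\infty$. $\lfloor x\rfloor$ is the largest integer not exceeding $x$. All sums defining $d_\alpha(j)$ are finite. *)

(* Defs.v *)
From mathcomp Require Import all_boot all_order all_algebra.
From Stdlib Require BinNat.
Set Implicit Arguments. Unset Strict Implicit. Unset Printing Implicit Defensive.
Import Order.TTheory GRing.Theory Num.Theory.
Local Open Scope ring_scope.

(* Large integer literals: entered in binary (N) to avoid unary nat parsing. *)
Definition zp (n : BinNums.N) : int := Posz (nat_of_bin n).
Definition zn (n : BinNums.N) : int := - Posz (nat_of_bin n).

Definition row_of (s : seq int) (j : nat) : int :=
  if j is j'.+1 then nth 0 s j' else 0.

Fixpoint recmat (r1 r2 r3 : seq int) (i j : nat) {struct i} : int :=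
  match i with
  | 0 => 0
  | 1 => row_of r1 j
  | 2 => row_of r2 j
  | 3 => row_of r3 j
  | ((((i3.+1 as i2).+1) as i1).+1) =>
      if j is 0 then 0 else
      30 * recmat r1 r2 r3 i1 (j - 1)%N - 108 * recmat r1 r2 r3 i1 (j - 2)%N
      + 81 * recmat r1 r2 r3 i1 (j - 3)%N - 12 * recmat r1 r2 r3 i2 (j - 1)%N
      + 9 * recmat r1 r2 r3 i2 (j - 2)%N + recmat r1 r2 r3 i3 (j - 1)%N
  end.

Module Rows.
Import BinNat.
Definition a1 : seq int := [:: zp 10; zn 36; zp 27].
Definition a2 : seq int := [:: zn 8; zp 306; zn 2160; zp 5508; zn 5832; zp 2187].
Definition a3 : seq int := [:: zp 1; zn 360; zp 10566; zn 99144; zp 423549; zn 944784; zp 1141614; zn 708588; zp 177147].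
Definition b1 : seq int := [:: zn 9; zp 252; zn 891; zp 729].
Definition b2 : seq int := [:: zp 1; zn 378; zp 8613; zn 54675; zp 138510; zn 150903; zp 59049].
Definition b3 : seq int := [:: zp 0; zp 147; zn 14553; zp 312255; zn 2617839; zp 10764414; zn 23914845; zp 29288304; zn 18600435; zp 4782969].
End Rows.

Definition amat : nat -> nat -> int := recmat Rows.a1 Rows.a2 Rows.a3.

Definition bmat : nat -> nat -> int := recmat Rows.b1 Rows.b2 Rows.b3.

(* d_alpha(j); the sum over k >= 1 is written as the sum over 1 <= k <= 3j,
   which is exact because a(k,j) = b(k,j) = 0 for k > 3j.
   d 0 is an unused junk value. *)
Fixpoint dseq (alpha : nat) : nat -> int :=
  match alpha with
  | 0 => fun _ => 0
  | 1 => row_of [:: 9]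
  | (alpha'.+1 as am1).+1 =>
      fun j => \sum_(1 <= k < 3 * j + 1)
                 (if ~~ odd alpha'.+2 then amat k j else bmat k j) * dseq am1 k
  end.

(* 3-adic order with pi(0) = infinity (None). *)
Definition pi3 (x : int) : option nat :=
  if x == 0 then None else Some (logn 3 `|x|%N).

Definition pi3_ge (x : int) (n : nat) : bool :=
  if pi3 x is Some v then (n <= v)%N else true.

(* Main.v *)
Require Import Defs.
From mathcomp Require Import all_boot all_order all_algebra zify.
Set Implicit Arguments. Unset Strict Implicit. Unset Printing Implicit Defensive.
Import Order.TTheory GRing.Theory Num.Theory.
Local Open Scope ring_scope.

Definition Q (x : int) (n : nat) : Prop := ((3:int) ^+ n %| x)%Z.
Definition P (x : int) (L : int) : Prop :=
  forall n : nat, 3 * (n:int) <= L + 2 -> Q x n.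

Lemma Q_le x m n : (n <= m)%N -> Q x m -> Q x n.
Proof. move=> le; apply: dvdz_trans; exact: dvdz_exp2l. Qed.

Lemma P_of_Q x L (m : nat) : L <= 3 * (m:int) -> Q x m -> P x L.
Proof. move=> hL hQ n hn; apply: (Q_le (m:=m)) => //; lia. Qed.

Lemma P_triv x L : L <= 0 -> P x L.
Proof. move=> hL n hn; have -> : n = 0%N by lia. by rewrite /Q expr0 dvd1z. Qed.

Lemma P_le x L L' : L' <= L -> P x L -> P x L'.
Proof. move=> h hP n hn; apply: hP; lia. Qed.

Lemma P0 L : P 0 L.
Proof. by move=> n _; exact: dvdz0. Qed.

Lemma PD x y L : P x L -> P y L -> P (x + y) L.
Proof. move=> hx hy n hn; exact: rpredD (hx n hn) (hy n hn). Qed.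

Lemma PN x L : P x L -> P (- x) L.
Proof. move=> hx n hn; rewrite /Q rpredN; exact: hx. Qed.

Lemma PB x y L : P x L -> P y L -> P (x - y) L.
Proof. by move=> hx hy; apply: PD => //; apply: PN. Qed.

Lemma Psum (I : Type) (r : seq I) (Pr : pred I) (F : I -> int) L :
  (forall i, Pr i -> P (F i) L) -> P (\sum_(i <- r | Pr i) F i) L.
Proof.
move=> h; apply: (big_ind (fun x => P x L)); [exact: P0 | move=> x y; exact: PD | exact: h].
Qed.

Lemma exists_a (L : int) : exists a : nat, (a = 0%N \/ 3 * (a:int) <= L + 2) /\ L <= 3 * (a:int).
Proof.
case: L => [l|l].
- exists ((l + 2) %/ 3)%N; split; [right|]; lia.
- exists 0%N; split; [left|]; lia.
Qed.

Lemma PM x y L M : P x L -> P y M -> P (x * y) (L + M).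
Proof.
move=> hx hy n hn.
have [a [ha1 ha2]] := exists_a L.
have [b [hb1 hb2]] := exists_a M.
have Qa : Q x a.
  case: ha1 => [->|h]; last exact: hx. by rewrite /Q expr0 dvd1z.
have Qb : Q y b.
  case: hb1 => [->|h]; last exact: hy. by rewrite /Q expr0 dvd1z.
apply: (Q_le (m := (a + b)%N)); first lia.
by rewrite /Q exprD; apply: dvdz_mul.
Qed.

Lemma recmat0 r1 r2 r3 i : recmat r1 r2 r3 i 0 = 0.
Proof. by case: i => [|[|[|[|i]]]]. Qed.

Lemma recmat_rec0 r1 r2 r3 i j :
  recmat r1 r2 r3 i.+4 j.+1 =
      30 * recmat r1 r2 r3 i.+3 (j.+1 - 1) - 108 * recmat r1 r2 r3 i.+3 (j.+1 - 2)
      + 81 * recmat r1 r2 r3 i.+3 (j.+1 - 3) - 12 * recmat r1 r2 r3 i.+2 (j.+1 - 1)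
      + 9 * recmat r1 r2 r3 i.+2 (j.+1 - 2) + recmat r1 r2 r3 i.+1 (j.+1 - 1).
Proof. by []. Qed.

Lemma recmat_rec r1 r2 r3 i j :
  recmat r1 r2 r3 i.+4 j.+1 =
      30 * recmat r1 r2 r3 i.+3 j - 108 * recmat r1 r2 r3 i.+3 j.-1
      + 81 * recmat r1 r2 r3 i.+3 j.-2 - 12 * recmat r1 r2 r3 i.+2 j
      + 9 * recmat r1 r2 r3 i.+2 j.-1 + recmat r1 r2 r3 i.+1 j.
Proof.
rewrite recmat_rec0.
have -> : (j.+1 - 1 = j)%N by lia.
have -> : (j.+1 - 2 = j.-1)%N by lia.
by have -> : (j.+1 - 3 = j.-2)%N by lia.
Qed.

Lemma Pc30 : P 30 3. Proof. apply: (P_of_Q (m:=1)); by vm_compute. Qed.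
Lemma Pc108 : P 108 9. Proof. apply: (P_of_Q (m:=3)); by vm_compute. Qed.
Lemma Pc81 : P 81 12. Proof. apply: (P_of_Q (m:=4)); by vm_compute. Qed.
Lemma Pc12 : P 12 3. Proof. apply: (P_of_Q (m:=1)); by vm_compute. Qed.
Lemma Pc9 : P 9 6. Proof. apply: (P_of_Q (m:=2)); by vm_compute. Qed.

Lemma recmat_P r1 r2 r3 (L : nat -> nat -> int) :
  (forall i j, (1 <= i <= 3)%N -> P (recmat r1 r2 r3 i j) (L i j)) ->
  (forall i j, L i.+4 j.+1 <= 3 + L i.+3 j) ->
  (forall i j, L i.+4 j.+2 <= 9 + L i.+3 j) ->
  (forall i j, L i.+4 j.+3 <= 12 + L i.+3 j) ->
  (forall i j, L i.+4 j.+1 <= 3 + L i.+2 j) ->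
  (forall i j, L i.+4 j.+2 <= 6 + L i.+2 j) ->
  (forall i j, L i.+4 j.+1 <= L i.+1 j) ->
  forall i j, (1 <= i)%N -> P (recmat r1 r2 r3 i j) (L i j).
Proof.
move=> hb h1 h2 h3 h4 h5 h6 i.
elim: i {-2}i (leqnn i) => [|N IH] i hi j hi1; first by lia.
case: i hi hi1 => [|[|[|[|i]]]] hi hi1; try (apply: hb; lia).
case: j => [|j]; first by rewrite recmat0; exact: P0.
have IHr : forall k jj, (1 <= k <= N)%N -> P (recmat r1 r2 r3 k jj) (L k jj).
  by move=> k jj hk; apply: IH; lia.
rewrite recmat_rec.
have T1 : forall (c : int) (e : int) k jj Lt, P c e -> (1 <= k <= N)%N ->
   Lt <= e + L k jj -> P (c * recmat r1 r2 r3 k jj) Lt.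
  move=> c e k jj Lt hc hk hle; apply: (P_le hle); apply: PM => //; exact: IHr.
apply: PD; last first.
  apply: (P_le (h6 i j)); apply: IHr; lia.
apply: PD; last first.
  case: j => [|j]; first by rewrite recmat0 mulr0; exact: P0.
  apply: (T1 _ 6); [exact: Pc9 | lia | exact: h5].
apply: PB; last first.
  apply: (T1 _ 3); [exact: Pc12 | lia | exact: h4].
apply: PD; last first.
  case: j => [|[|j]]; try by rewrite recmat0 mulr0; exact: P0.
  apply: (T1 _ 12); [exact: Pc81 | lia | exact: h3].
apply: PB.
  apply: (T1 _ 3); [exact: Pc30 | lia | exact: h1].
case: j => [|j]; first by rewrite recmat0 mulr0; exact: P0.
apply: (T1 _ 9); [exact: Pc108 | lia | exact: h2].
Qed.

Definition Pb (x : int) (L : int) : bool :=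
  (L <= 0) || (((3:int) ^+ ((`|L| + 2) %/ 3)%N) %| x)%Z.

Lemma PbP x L : Pb x L -> P x L.
Proof.
case/orP => [h|h]; first exact: P_triv.
case: (lerP L 0) => hL; first exact: P_triv.
apply: (P_of_Q (m := ((`|L| + 2) %/ 3)%N)) => //; lia.
Qed.

Lemma row_P s (L : nat -> int) :
  all (fun j => Pb (row_of s j) (L j)) (iota 0 (size s).+1) ->
  forall j, P (row_of s j) (L j).
Proof.
move=> /allP h j.
case: (leqP j (size s)) => hj.
  apply: PbP; apply: h; rewrite mem_iota; lia.
case: j hj => [|j] hj //=.
rewrite nth_default; [exact: P0 | lia].
Qed.


Lemma nat_of_binM (a b : BinNums.N) : nat_of_bin (BinNat.N.mul a b) = (nat_of_bin a * nat_of_bin b)%N.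
Proof. case: a => [|a]; case: b => [|b] //=; first by rewrite muln0. exact: nat_of_mul_pos. Qed.

Definition N3 : BinNums.N := BinNums.Npos (BinNums.xI BinNums.xH).

Fixpoint d3 (m : nat) (n : BinNums.N) : bool :=
  if m is m'.+1 then BinNat.N.eqb (BinNat.N.modulo n N3) BinNums.N0 && d3 m' (BinNat.N.div n N3) else true.

Lemma d3P m n : d3 m n -> (3 ^ m %| nat_of_bin n)%N.
Proof.
elim: m n => [|m IH] n /=; first by rewrite dvd1n.
case/andP => /BinNat.N.eqb_spec h /IH hd.
have -> : n = BinNat.N.mul N3 (BinNat.N.div n N3) by apply/BinNat.N.Div0.div_exact.
by rewrite nat_of_binM expnS dvdn_mul.
Qed.

Definition sg (x : bool * BinNums.N) : int := if x.1 then zn x.2 else zp x.2.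

Module RL.
Import BinNat.
Local Open Scope N_scope.
Definition a1 : seq (bool * BinNums.N) := [:: (false, 10); (true, 36); (false, 27)].
Definition a2 : seq (bool * BinNums.N) := [:: (true, 8); (false, 306); (true, 2160); (false, 5508); (true, 5832); (false, 2187)].
Definition a3 : seq (bool * BinNums.N) := [:: (false, 1); (true, 360); (false, 10566); (true, 99144); (false, 423549); (true, 944784); (false, 1141614); (true, 708588); (false, 177147)].
Definition b1 : seq (bool * BinNums.N) := [:: (true, 9); (false, 252); (true, 891); (false, 729)].
Definition b2 : seq (bool * BinNums.N) := [:: (false, 1); (true, 378); (false, 8613); (true, 54675); (false, 138510); (true, 150903); (false, 59049)].
Definition b3 : seq (bool * BinNums.N) := [:: (false, 0); (false, 147); (true, 14553); (false, 312255); (true, 2617839); (false, 10764414); (true, 23914845); (false, 29288304); (true, 18600435); (false, 4782969)].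
End RL.

Lemma ea1 : Rows.a1 = map sg RL.a1. Proof. reflexivity. Qed.
Lemma ea2 : Rows.a2 = map sg RL.a2. Proof. reflexivity. Qed.
Lemma ea3 : Rows.a3 = map sg RL.a3. Proof. reflexivity. Qed.
Lemma eb1 : Rows.b1 = map sg RL.b1. Proof. reflexivity. Qed.
Lemma eb2 : Rows.b2 = map sg RL.b2. Proof. reflexivity. Qed.
Lemma eb3 : Rows.b3 = map sg RL.b3. Proof. reflexivity. Qed.


Definition Pbin (x : bool * BinNums.N) (L : int) : bool :=
  (L <= 0) || d3 ((`|L| + 2) %/ 3) x.2.

Lemma PbinP x L : Pbin x L -> P (sg x) L.
Proof.
case/orP => [h|h]; first exact: P_triv.
case: (lerP L 0) => hL; first exact: P_triv.
apply: (P_of_Q (m := ((`|L| + 2) %/ 3)%N)); first lia.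
rewrite /Q dvdzE abszX /sg; case: x h => [[] n] /= h.
- by rewrite /zn abszN /=; apply: d3P.
- by rewrite /zp /=; apply: d3P.
Qed.

Fixpoint chk (s : seq (bool * BinNums.N)) (L : nat -> int) (j : nat) : bool :=
  if s is x :: s' then Pbin x (L j) && chk s' L j.+1 else true.

Lemma chkP s L j0 : chk s L j0 -> forall j, P (nth 0 (map sg s) j) (L (j0 + j)%N).
Proof.
elim: s j0 => [|x s IH] j0 /=.
  by move=> _ j; rewrite nth_nil; exact: P0.
case/andP => hx hs [|j] /=.
  by rewrite addn0; apply: PbinP.
by rewrite -addSnnS; apply: IH.
Qed.

Lemma row_chk s (L : nat -> int) : chk s L 1 -> forall j, P (row_of (map sg s) j) (L j).
Proof.
move=> h [|j] /=; first exact: P0.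
by rewrite -add1n; apply: chkP.
Qed.

Definition LA (i j : nat) : int := 4 * (j:int) - 2 * (i:int) - (if i == 1%N then 2 else 0).
Definition LB1 (i j : nat) : int := 2 * (j:int) - 4 * (i:int) + 6.
Definition LB2 (i j : nat) : int := 3 * (j:int) - 3 * (i:int) + 3.

Lemma FA i j : (1 <= i)%N -> P (amat i j) (LA i j).
Proof.
apply: recmat_P.
- move=> {}i {}j hi; case: i hi => [|[|[|[|i]]]] hi //=;
  [rewrite ea1; apply: (row_chk (L := LA 1)) | rewrite ea2; apply: (row_chk (L := LA 2)) | rewrite ea3; apply: (row_chk (L := LA 3))];
  vm_compute; reflexivity.
all: rewrite /LA; move=> {}i {}j; case: i => [|i] /=; lia.
Qed.

Lemma FB1 i j : (1 <= i)%N -> P (bmat i j) (LB1 i j).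
Proof.
apply: recmat_P.
- move=> {}i {}j hi; case: i hi => [|[|[|[|i]]]] hi //=;
  [rewrite eb1; apply: (row_chk (L := LB1 1)) | rewrite eb2; apply: (row_chk (L := LB1 2)) | rewrite eb3; apply: (row_chk (L := LB1 3))];
  vm_compute; reflexivity.
all: rewrite /LB1; move=> {}i {}j; lia.
Qed.

Lemma FB2 i j : (1 <= i)%N -> P (bmat i j) (LB2 i j).
Proof.
apply: recmat_P.
- move=> {}i {}j hi; case: i hi => [|[|[|[|i]]]] hi //=;
  [rewrite eb1; apply: (row_chk (L := LB2 1)) | rewrite eb2; apply: (row_chk (L := LB2 2)) | rewrite eb3; apply: (row_chk (L := LB2 3))];
  vm_compute; reflexivity.
all: rewrite /LB2; move=> {}i {}j; lia.
Qed.

Definition hp (k : nat) : int :=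
  2 * (k:int) - 4 + (if k == 1%N then 2 else 0) + (if k == 4%N then 2 else 0).
Definition gp (j : nat) : int := 4 * (j:int) - 4 + (if j == 2%N then 2 else 0).

Lemma checkA k j : (1 <= k)%N -> (1 <= j)%N -> P (amat k j) (gp j - hp k).
Proof.
move=> hk hj.
case: (j =P 2%N) => [->|hj2].
  case: k hk => [|[|[|[|k]]]] hk //.
  - by apply: PbP; vm_compute.
  - by apply: PbP; vm_compute.
  - by apply: PbP; vm_compute.
  apply: P_triv; rewrite /gp /hp /=; case: k hk => [|k] hk /=; lia.
apply: (P_le _ (@FA k j hk)); rewrite /gp /hp /LA.
repeat case: eqP => ?; lia.
Qed.

Lemma checkB k j : (1 <= k)%N -> (1 <= j)%N -> P (bmat k j) (hp j + 6 - gp k).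
Proof.
move=> hk hj.
case: (j =P 1%N) => [->|hj1].
  case: k hk => [|[|k]] hk //.
  - by apply: PbP; vm_compute.
  apply: P_triv; rewrite /gp /hp /=; case: k hk => [|k] hk /=; lia.
case: (j =P 4%N) => [->|hj4].
  apply: (P_le _ (@FB2 k 4 hk)); rewrite /gp /hp /LB2.
  repeat case: eqP => ?; lia.
apply: (P_le _ (@FB1 k j hk)); rewrite /gp /hp /LB1.
repeat case: eqP => ?; lia.
Qed.

Lemma Psum_iota m n (F : nat -> int) L :
  (forall i, (m <= i < n)%N -> P (F i) L) -> P (\sum_(m <= i < n) F i) L.
Proof.
move=> h; rewrite big_seq; apply: Psum => i; rewrite mem_index_iota; exact: h.
Qed.

Lemma stepA (c : int) (d : nat -> int) :
  (forall k, (1 <= k)%N -> P (d k) (c + hp k)) ->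
  forall j, (1 <= j)%N -> P (\sum_(1 <= k < 3 * j + 1) amat k j * d k) (c + gp j).
Proof.
move=> hd j hj; apply: Psum_iota => k /andP [hk _].
apply: (P_le _ (PM (checkA hk hj) (hd k hk))); lia.
Qed.

Lemma stepB (c : int) (d : nat -> int) :
  (forall k, (1 <= k)%N -> P (d k) (c + gp k)) ->
  forall j, (1 <= j)%N -> P (\sum_(1 <= k < 3 * j + 1) bmat k j * d k) (c + 6 + hp j).
Proof.
move=> hd j hj; apply: Psum_iota => k /andP [hk _].
apply: (P_le _ (PM (checkB hk hj) (hd k hk))); lia.
Qed.

Lemma dseqS n j : dseq n.+2 j =
  \sum_(1 <= k < 3 * j + 1) (if ~~ odd n.+2 then amat k j else bmat k j) * dseq n.+1 k.
Proof. by []. Qed.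

Lemma inv n : forall k, (1 <= k)%N -> P (dseq (2 * n).+1 k) (6 * (n.+1 : int) + hp k).
Proof.
elim: n => [|n IH] k hk.
  case: k hk => [|[|k]] hk //.
  - by apply: PbP; vm_compute.
  - by rewrite /= nth_nil; exact: P0.
have -> : (2 * n.+1).+1 = ((2 * n).+1).+2 by rewrite mulnS.
rewrite dseqS.
have -> : ~~ odd ((2 * n).+1).+2 = false by rewrite !oddS oddM.
have Ev : forall k, (1 <= k)%N -> P (dseq ((2 * n).+1).+1 k) (6 * (n.+1 : int) + gp k).
  move=> k' hk'; rewrite dseqS.
  have -> : ~~ odd (2 * n).+2 = true by rewrite !oddS oddM.
  exact: stepA.
apply: (P_le _ (stepB Ev hk)); lia.
Qed.

Local Close Scope ring_scope.

Theorem theorem3p3 (alpha j : nat) :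
  (1 <= alpha)%N -> (1 <= j)%N ->
  pi3_ge (dseq (2 * alpha - 1) j) (2 * alpha + (2 * j - 2) %/ 3).
Proof.
move=> ha hj.
have -> : (2 * alpha - 1 = (2 * alpha.-1).+1)%N by lia.
have H := @inv alpha.-1 j hj.
set x := dseq _ j in H *.
rewrite /pi3_ge /pi3; case: eqP => // /eqP hx0.
have hQ : Q x (2 * alpha + (2 * j - 2) %/ 3)%N.
  apply: H.
  have : (2 * (j:int) - 4 <= hp j)%R by rewrite /hp; repeat case: eqP => ?; lia.
  lia.
move: hQ; rewrite /Q dvdzE abszX /= pfactor_dvdn //.
by rewrite absz_gt0.
Qed.
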